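(* Let $\mathcal{F}$ be a finite forest and let $\vec\lambda:V(\mathcal{F})\to\mathbb{Z}_{\ge 0}$ be any labelling of its vertices. Then the bounded degree complex $\mathrm{BD}^{\vec\lambda}(\mathcal{F})$ is vertex decomposable.
   Context: For a finite simple graph $G$ and $\vec\lambda:V(G)\to\mathbb{Z}_{\ge0}$, the bounded degree complex $\mathrm{BD}^{\vec\lambda}(G)$ is the simplicial complex whose simplices are the subsets $\sigma\subseteq E(G)$ such that for every vertex $v\in V(G)$ the number of edges of $\sigma$ incident to $v$ is at most $\vec\lambda(v)$. For a simplicial complex $K$ and a vertex $v$, $\mathrm{lk}(v,K)=\{\tau\in K: v\notin\tau,\ \tau\cup\{v\}\in K\}$ and $\mathrm{del}(v,K)=\{\tau\in K: v\notin\tau\}$. A simplicial complex $K$ is vertex decomposable if $K$ is a simplex (the set of all subsets of a finite set, including $\{\emptyset\}$), or $K$ contains a vertex $v$ such that (i) both $\mathrm{lk}(v,K)$ and $\mathrm{del}(v,K)$ are vertex decomposable, and (ii) every facet (maximal simplex) of $\mathrm{del}(v,K)$ is a facet of $K$. *)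

(* Defs.v *)
From mathcomp Require Import all_boot.
Set Implicit Arguments. Unset Strict Implicit. Unset Printing Implicit Defensive.

(* A finite simple graph is given by a vertex type V : finType and an
   adjacency relation e : rel V which is symmetric and irreflexive. *)

Section Complexes.
Variable T : finType.
Implicit Types (K : {set {set T}}) (v : T) (A F : {set T}).

Definition lk v K : {set {set T}} :=
  [set tau in K | (v \notin tau) && (v |: tau \in K)].
Definition del v K : {set {set T}} := [set tau in K | v \notin tau].

Definition is_facet K F : Prop :=
  F \in K /\ forall G, G \in K -> F \subset G -> G = F.

Inductive vertex_decomposable : {set {set T}} -> Prop :=
| vd_simplex (A : {set T}) : vertex_decomposable (powerset A)
| vd_shed K v :
    [set v] \in K ->
    vertex_decomposable (lk v K) ->
    vertex_decomposable (del v K) ->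
    (forall F, is_facet (del v K) F -> is_facet K F) ->
    vertex_decomposable K.
End Complexes.

Section Graphs.
Variable V : finType.
Variable e : rel V.

Definition edges : {set {set V}} :=
  [set s : {set V} | [exists u, exists w, e u w && (s == [set u; w])]].

Definition BD (lam : V -> nat) : {set {set {set V}}} :=
  [set sigma : {set {set V}} | (sigma \subset edges) &&
     [forall v, #|[set s in sigma | v \in s]| <= lam v]].

Definition forest : Prop :=
  forall c : seq V, uniq c -> 2 < size c -> ~~ cycle e c.
End Graphs.

(* Main.v *)
Require Import Defs.
From mathcomp Require Import all_boot.
From mathcomp Require Import zify.
From Stdlib Require Import Classical.
Set Implicit Arguments. Unset Strict Implicit. Unset Printing Implicit Defensive.


Definition cone (T : finType) (f : T) (K : {set {set T}}) : {set {set T}} :=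
  [set r | r :\ f \in K].

Lemma facet_cone (T : finType) (f : T) (L : {set {set T}}) F :
  (forall t, t \in L -> f \notin t) ->
  is_facet (cone f L) F <-> (f \in F /\ is_facet L (F :\ f)).
Proof.
move=> Lf; split.
- case=> FL Fmax; rewrite inE in FL.
  have fF : f \in F.
    have -> : F = f |: F.
      apply/esym; apply: Fmax; last by apply: subsetUr.
      by rewrite inE setDUl setDv set0U.
    by rewrite setU11.
  split=> //; split=> // G GL sub.
  have : f |: G = F.
    apply: Fmax.
      rewrite inE setDUl setDv set0U.
      by rewrite (setDidPl _) // disjoint_sym disjoints1 Lf.
    apply: (subset_trans (_ : F \subset f |: (F :\ f))).
      by rewrite setD1K.
    by rewrite setUS.
  move=> <-; rewrite setDUl setDv set0U.
  by rewrite (setDidPl _) // disjoint_sym disjoints1 Lf.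
- case=> fF [FL Fmax]; split; first by rewrite inE.
  move=> G; rewrite inE => GL sub.
  have e1 : G :\ f = F :\ f by apply: Fmax => //; apply: setSD.
  have fG : f \in G by apply: (subsetP sub).
  by rewrite -(setD1K fG) -(setD1K fF) e1.
Qed.

Lemma cone_vd (T : finType) (K : {set {set T}}) :
  vertex_decomposable K -> forall f, (forall t, t \in K -> f \notin t) ->
  vertex_decomposable (cone f K).
Proof.
elim=> {K} [A|K v vK _ IHl _ IHd Hf] f Kf.
- have fA : f \notin A by apply: Kf; rewrite powersetE.
  have -> : cone f (powerset A) = powerset (f |: A).
    by apply/setP=> r; rewrite inE !powersetE subDset.
  exact: vd_simplex.
- have vf : v != f.
    by apply/eqP=> E; move: (Kf _ vK); rewrite E set11.
  have vfs : [set v] :\ f = [set v].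
    by apply/setP=> x; rewrite !inE; case: eqP => // ->; rewrite eq_sym (negPf vf).
  apply: (@vd_shed _ _ v).
  + by rewrite inE vfs.
  + have -> : lk v (cone f K) = cone f (lk v K).
      apply/setP=> r; rewrite !inE vf /=.
      have -> : (v |: r) :\ f = v |: (r :\ f).
        by apply/setP=> x; rewrite !inE; case: (eqVneq x v) => [->|] //=; rewrite vf.
      done.
    apply: IHl => t; rewrite inE => /and3P[/Kf].
    done.
  + have -> : del v (cone f K) = cone f (del v K).
      by apply/setP=> r; rewrite !inE vf /= andbC.
    apply: IHd => t; rewrite inE => /andP[/Kf].
    done.
  + move=> F.
    have dK : forall t, t \in del v K -> f \notin t.
      by move=> t; rewrite inE => /andP[/Kf].
    have -> : del v (cone f K) = cone f (del v K).
      by apply/setP=> r; rewrite !inE vf /= andbC.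
    move=> /(facet_cone _ dK) [fF /Hf Fc].
    by apply/(facet_cone _ Kf).
Qed.


Definition deg (V : finType) (s : {set {set V}}) (v : V) := #|[set x in s | v \in x]|.
Definition C (V : finType) (E : {set {set V}}) (lam : V -> nat) : {set {set {set V}}} :=
  [set sigma : {set {set V}} | (sigma \subset E) && [forall v, deg sigma v <= lam v]].

Lemma BD_C (V : finType) (e : rel V) lam : BD e lam = C (edges e) lam.
Proof. by []. Qed.

Lemma inC (V : finType) (E : {set {set V}}) lam s :
  (s \in C E lam) = (s \subset E) && [forall v, deg s v <= lam v].
Proof. by rewrite inE. Qed.

Lemma deg_sub (V : finType) (s t : {set {set V}}) v : t \subset s -> deg t v <= deg s v.
Proof.
move=> ts; apply: subset_leq_card; apply/subsetP=> x; rewrite !inE => /andP[xt ->].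
by rewrite (subsetP ts).
Qed.

Lemma C_down (V : finType) (E : {set {set V}}) lam (s t : {set {set V}}) :
  s \in C E lam -> t \subset s -> t \in C E lam.
Proof.
rewrite !inC => /andP[sE /forallP H] ts; rewrite (subset_trans ts sE) /=.
by apply/forallP=> v; apply: leq_trans (deg_sub v ts) (H v).
Qed.

Lemma degU1 (V : finType) (s : {set {set V}}) f v : f \notin s ->
  deg (f |: s) v = deg s v + (v \in f).
Proof.
move=> fs; rewrite /deg; case: (boolP (v \in f)) => vf.
- have -> : [set x in f |: s | v \in x] = f |: [set x in s | v \in x].
    by apply/setP=> x; rewrite !inE; case: (eqVneq x f) => [->|_]; rewrite ?eqxx /= ?vf.
  by rewrite cardsU1 inE (negPf fs) addnC.
- have -> : [set x in f |: s | v \in x] = [set x in s | v \in x].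
    by apply/setP=> x; rewrite !inE; case: (eqVneq x f) => [->|_]; rewrite ?eqxx /= ?(negPf vf) ?andbF.
  by rewrite addn0.
Qed.

Lemma del_C (V : finType) (E : {set {set V}}) lam g :
  del g (C E lam) = C (E :\ g) lam.
Proof.
apply/setP=> s; rewrite inE !inC subsetD1.
by case: (s \subset E); case: (g \in s); rewrite ?andbF ?andbT.
Qed.

Lemma lk_C (V : finType) (E : {set {set V}}) lam g :
  g \in E -> (forall v, v \in g -> 0 < lam v) ->
  lk g (C E lam) = C (E :\ g) (fun v => lam v - (v \in g)).
Proof.
move=> gE lpos; apply/setP=> s; rewrite inE !inC subsetD1.
apply/idP/idP.
- case/and4P. move=> /andP[sE _]. move=> gs _. move=> /forallP H. rewrite sE gs /=.
  apply/forallP=> v; move: (H v); rewrite degU1 //.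
  by case: (v \in g) => /=; lia.
- case/andP=> /andP[sE gs] /forallP H.
  have H' : forall v, deg s v + (v \in g) <= lam v.
    move=> v; move: (H v); case vg: (v \in g) => /=; last by lia.
    by move: (lpos v vg); lia.
  rewrite sE gs /= subUset sub1set gE sE /=.
  apply/andP; split; apply/forallP=> v.
    exact: leq_trans (leq_addr _ _) (H' v).
  by rewrite degU1.
Qed.

Lemma C_remove (V : finType) (E : {set {set V}}) lam f :
  f \in E -> [set f] \notin C E lam -> C E lam = C (E :\ f) lam.
Proof.
move=> fE fn; apply/setP=> s; rewrite !inC subsetD1.
case fs: (f \in s); last by rewrite andbT.
rewrite /= andbF; apply/negbTE; apply: contra fn => Hs.
by apply: (C_down (s := s)); rewrite ?inC // sub1set.
Qed.

Lemma C0 (V : finType) lam : C (set0 : {set {set V}}) lam = powerset set0.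
Proof.
apply/setP=> s; rewrite inC powersetE; case s0: (s \subset set0) => //=.
move/subset_leq_card: s0; rewrite cards0 leqn0 cards_eq0 => /eqP ->.
by apply/forallP=> v; rewrite /deg (_ : [set x in set0 | _] = set0) ?cards0 //; apply/setP=> x; rewrite !inE.
Qed.

Lemma C_cone (V : finType) (E : {set {set V}}) lam f :
  f \in E -> (forall v, v \in f -> deg E v <= lam v) ->
  C E lam = [set r | r :\ f \in C (E :\ f) lam].
Proof.
move=> fE Hf; apply/setP=> s; rewrite [in RHS]inE !inC subsetD1.
have -> : f \notin s :\ f by rewrite !inE eqxx.
rewrite andbT; apply/idP/idP.
- case/andP=> sE /forallP H; rewrite (subset_trans (subsetDl s [set f]) sE) /=.
  by apply/forallP=> v; apply: leq_trans (H v); apply: deg_sub; apply: subsetDl.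
- case/andP=> sE /forallP H.
  have sE' : s \subset E.
    apply/subsetP=> x xs; case: (eqVneq x f) => [->//|xf].
    by apply: (subsetP sE); rewrite !inE xf.
  rewrite sE' /=; apply/forallP=> v; case: (boolP (v \in f)) => vf.
    exact: leq_trans (deg_sub v sE') (Hf v vf).
  suff -> : deg s v = deg (s :\ f) v by [].
  rewrite /deg; apply: eq_card=> x; rewrite !inE.
  by case: (eqVneq x f) => [->|]; rewrite ?(negPf vf) ?andbF.
Qed.

Lemma shed_facet (V : finType) (E : {set {set V}}) lam g :
  (forall F, is_facet (del g (C E lam)) F -> g |: F \notin C E lam) ->
  forall F, is_facet (del g (C E lam)) F -> is_facet (C E lam) F.
Proof.
move=> H F Fd; have gn := H F Fd; case: Fd => FD Fmax.
move: (FD); rewrite inE => /andP[FK gF]; split=> // G GK FG.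
case gG: (g \in G).
  by move: gn; rewrite (C_down GK) //; rewrite subUset sub1set gG FG.
by apply: Fmax => //; rewrite inE GK gG.
Qed.


Definition adj (V : finType) (E : {set {set V}}) : rel V := fun x y => [set x; y] \in E.

Lemma adj_sym (V : finType) (E : {set {set V}}) : symmetric (adj E).
Proof. by move=> x y; rewrite /adj setUC. Qed.

Lemma in_edges (V : finType) (e : rel V) s :
  s \in edges e -> exists a b, e a b /\ s = [set a; b].
Proof. by rewrite inE => /existsP[a /existsP[b /andP[eab /eqP ->]]]; exists a, b. Qed.

Lemma adj_e (V : finType) (e : rel V) (E : {set {set V}}) :
  E \subset edges e -> symmetric e -> irreflexive e ->
  forall x y, adj E x y -> e x y.
Proof.
move=> Esub esym eirr x y /(subsetP Esub) /in_edges [a [b [eab Hs]]].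
have xs : x \in [set a; b] by rewrite -Hs !inE eqxx.
have ys : y \in [set a; b] by rewrite -Hs !inE eqxx orbT.
have ab : a != b by apply/eqP=> E1; move: eab; rewrite E1 eirr.
move: xs ys; rewrite !inE => /orP[] /eqP Ex /orP[] /eqP Ey; subst x y => //.
- have : b \in [set a; a] by rewrite Hs !inE eqxx orbT.
  by rewrite !inE orbb (eq_sym b) (negPf ab).
- by rewrite esym.
- have : a \in [set b; b] by rewrite Hs !inE eqxx.
  by rewrite !inE orbb (negPf ab).
Qed.

Lemma adj_irr (V : finType) (e : rel V) (E : {set {set V}}) :
  E \subset edges e -> symmetric e -> irreflexive e -> forall x, adj E x x = false.
Proof.
move=> Esub esym eirr x; apply/negbTE/negP=> /(adj_e Esub esym eirr).
by rewrite eirr.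
Qed.

Lemma edge_at (V : finType) (e : rel V) (E : {set {set V}}) s x :
  E \subset edges e -> s \in E -> x \in s -> exists y, s = [set x; y].
Proof.
move=> Esub sE; move: (subsetP Esub _ sE) => /in_edges [a [b [_ ->]]].
rewrite !inE => /orP[] /eqP ->; first by exists b.
by exists a; rewrite setUC.
Qed.

Lemma CL (V : finType) (e : rel V) (E : {set {set V}}) :
  E \subset edges e -> symmetric e -> irreflexive e -> forest e ->
  forall a q1 y q2, path (adj E) a (q1 ++ y :: q2) -> uniq (a :: q1 ++ y :: q2) ->
  q1 != [::] -> adj E y a -> False.
Proof.
move=> Esub esym eirr efor a q1 y q2 P U q1n ya.
have U' : uniq (a :: rcons q1 y).
  by move: U; rewrite -cat_rcons -cat_cons cat_uniq => /andP[].
have Hsz : 2 < size (a :: rcons q1 y) by case: q1 q1n {P U U'} => //= b q _; rewrite size_rcons.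
have Hc : cycle e (a :: rcons q1 y).
  rewrite /= rcons_path last_rcons; apply/andP; split; last exact: (adj_e Esub esym eirr ya).
  apply: (sub_path (adj_e Esub esym eirr)).
  by move: P; rewrite -cat_rcons cat_path => /andP[].
by move: (efor _ U' Hsz); rewrite Hc.
Qed.

Definition goodp (V : finType) (E : {set {set V}}) (s : seq V) :=
  uniq s && (if s is x :: p then path (adj E) x p else true).

Lemma maxpath (T : Type) (P : seq T -> Prop) (n : nat) :
  (forall s, P s -> size s <= n) -> forall s, P s ->
  exists s', [/\ P s', size s <= size s' & forall t, P t -> size t <= size s'].
Proof.
move=> B.
suff H : forall k s, P s -> n - size s <= k ->
  exists s', [/\ P s', size s <= size s' & forall t, P t -> size t <= size s'].
  by move=> s Ps; apply: (H (n - size s)).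
elim=> [|k IH] s Ps Hk.
- exists s; split=> // t Pt; move: (B t Pt); lia.
- case: (classic (exists t, P t /\ size s < size t)) => [[t [Pt st]]|N].
  + have := B t Pt => tn.
    have [s' [Ps' ts' M]] := IH t Pt ltac:(lia).
    exists s'; split=> //; lia.
  + exists s; split=> // t Pt; case: (leqP (size t) (size s)) => // st.
    by exfalso; apply: N; exists t.
Qed.

Lemma claimA (V : finType) (e : rel V) (E : {set {set V}}) :
  E \subset edges e -> symmetric e -> irreflexive e -> forest e ->
  forall a b r, goodp E [:: a, b & r] ->
  (forall t, goodp E t -> size t <= size [:: a, b & r]) ->
  forall z, adj E a z -> z = b.
Proof.
move=> Esub esym eirr efor a b r G M z az.
case: (eqVneq z b) => // zb.
move: (G) => /andP[U P].
case: (boolP (z \in [:: a, b & r])) => zin.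
- have za : z != a by apply/eqP=> E1; move: az; rewrite E1 (adj_irr Esub esym eirr).
  have zr : z \in r by move: zin; rewrite !inE (negPf za) (negPf zb).
  case/splitPr: zr U P => r1 r2 U P; exfalso.
  apply: (CL Esub esym eirr efor (a := a) (q1 := b :: r1) (y := z) (q2 := r2)) => //.
  by rewrite adj_sym.
- have : goodp E [:: z, a, b & r].
    rewrite /goodp /= -/(uniq [:: a, b & r]) U zin /=.
    by rewrite adj_sym az.
  by move/M => /=; rewrite ltnn.
Qed.

Lemma structure (V : finType) (e : rel V) (E : {set {set V}}) :
  E \subset edges e -> symmetric e -> irreflexive e -> forest e -> E != set0 ->
  exists u w q, [/\ adj E u w, (forall z, adj E w z -> z = u), adj E u q &
     (forall y, adj E u y -> y != q -> forall z, adj E y z -> z = u)].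
Proof.
move=> Esub esym eirr efor /set0Pn [s0 s0E].
have [a [b [eab Hs]]] := in_edges (subsetP Esub _ s0E).
have ab : a != b by apply/eqP=> E1; move: eab; rewrite E1 eirr.
have G0 : goodp E [:: a; b].
  by rewrite /goodp /= inE ab /= /adj -Hs s0E.
have B : forall s, goodp E s -> size s <= #|V|.
  move=> s /andP[/card_uniqP <- _]; exact: max_card.
have [s' [Gs' sz M]] := @maxpath _ (fun s => goodp E s) _ B _ G0.
case: s' Gs' sz M => [|x0 [|x1 r]] // Gs' _ M.
have A := claimA Esub esym eirr efor Gs' M.
move: (Gs') => /andP[U /= /andP[a01 P]].
exists x1, x0, (head x0 r); split.
- by rewrite adj_sym.
- exact: A.
- by case: r {Gs' M A U} P => [|y r] /=; [rewrite adj_sym | case/andP].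
- move=> y x1y yq z yz.
  case: (eqVneq y x0) => [Ey|yx0]; first by subst y; apply: A.
  case: (boolP (y \in [:: x0, x1 & r])) => yin.
  + have yx1 : y != x1 by apply/eqP=> E1; move: x1y; rewrite E1 (adj_irr Esub esym eirr).
    have yr : y \in r by move: yin; rewrite !inE (negPf yx0) (negPf yx1).
    case/splitPr: yr U P yq => r1 r2 U P yq; exfalso.
    apply: (CL Esub esym eirr efor (a := x1) (q1 := r1) (y := y) (q2 := r2)) => //.
    * by move: U => /andP[].
    * by case: r1 {U P} yq => //=; rewrite eqxx.
    * by rewrite adj_sym.
  + have Gt : goodp E [:: y, x1 & r].
      rewrite /goodp /= adj_sym x1y P andbT.
      move: U yin => /andP[_ ->]; rewrite !inE negb_or => /andP[_ ->].
      by rewrite andbT.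
    apply: (claimA Esub esym eirr efor Gt) => //.
Qed.


Lemma deg1 (V : finType) (f : {set V}) v : deg [set f] v = (v \in f).
Proof.
rewrite -[[set f]]setU0 degU1 ?inE //.
by rewrite /deg (_ : [set x in set0 | _] = set0) ?cards0 //; apply/setP=> x; rewrite !inE.
Qed.

Lemma main (V : finType) (e : rel V) :
  symmetric e -> irreflexive e -> forest e ->
  forall n (E : {set {set V}}), #|E| <= n -> E \subset edges e ->
  forall lam, vertex_decomposable (C E lam).
Proof.
move=> esym eirr efor; elim=> [|n IH] E cE Esub lam.
  move: cE; rewrite leqn0 cards_eq0 => /eqP ->; rewrite C0; exact: vd_simplex.
case: (eqVneq E set0) => [->|En]; first by rewrite C0; exact: vd_simplex.
have IHr : forall g lam', g \in E -> vertex_decomposable (C (E :\ g) lam').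
  move=> g lam' gE; apply: IH.
    by move: cE; rewrite (cardsD1 g) gE; lia.
  exact: subset_trans (subsetDl _ _) Esub.
case: (boolP [exists f in E, [set f] \notin C E lam]).
  case/existsP=> f /andP[fE fn]; rewrite (C_remove fE fn); exact: IHr.
move/existsPn=> H.
have lpos : forall f v, f \in E -> v \in f -> 0 < lam v.
  move=> f v fE vf; move: (H f); rewrite fE /= negbK inC => /andP[_ /forallP /(_ v)].
  by rewrite deg1 vf.
have [u [w [q [uw wleaf uq uleaf]]]] := structure Esub esym eirr efor En.
have fE : [set u; w] \in E by [].
have gE : [set u; q] \in E by [].
have airr := adj_irr Esub esym eirr.
case: (leqP (deg E u) (lam u)) => Hu.
-
  rewrite (C_cone fE).
    apply: (cone_vd (K := C (E :\ [set u; w]) lam)); first exact: IHr.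
    by move=> t; rewrite inC subsetD1 => /andP[/andP[_ ->]].
  move=> v; rewrite !inE => /orP[] /eqP ->; first exact: Hu.
  apply: (@leq_trans 1); last by apply: (lpos _ _ fE); rewrite !inE eqxx orbT.
  rewrite -(cards1 [set u; w]); apply: subset_leq_card; apply/subsetP=> x.
  rewrite !inE => /andP[xE wx].
  have [z Ex] := edge_at Esub xE wx.
  have wz : adj E w z by rewrite /adj -Ex.
  by rewrite Ex (wleaf z wz) setUC.
-
  set g := [set u; q].
  have ug : u \in g by rewrite !inE eqxx.
  apply: (@vd_shed _ _ g).
  + by move: (H g); rewrite gE /= negbK.
  + rewrite lk_C //; [exact: IHr | by move=> v; apply: lpos].
  + by rewrite del_C; exact: IHr.
  + apply: shed_facet => F; rewrite del_C => -[FD Fmax]; apply/negP => gF.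
    move: (FD); rewrite inC subsetD1 => /andP[/andP[FE gnF] /forallP Fdeg].
    move: gF; rewrite inC => /andP[_ /forallP /(_ u)]; rewrite degU1 // ug addn1 => Fu.
    have : ~~ ([set x in E | u \in x] \subset g |: [set x in F | u \in x]).
      apply/negP=> /subset_leq_card; rewrite cardsU1 inE (negPf gnF) /=.
      by rewrite -/(deg E u) -/(deg F u); lia.
    case/subsetPn=> h; rewrite !inE => /andP[hE uh].
    rewrite negb_or uh andbT => /andP[hg hF].
    have [y Eh] := edge_at Esub hE uh.
    have uy : adj E u y by rewrite /adj -Eh.
    have yq : y != q by apply: contra hg => /eqP yq; rewrite Eh yq.
    have yl := uleaf y uy yq.
    have yh : y \in h by rewrite Eh !inE eqxx orbT.
    have degy : deg F y = 0.
      apply/eqP; rewrite cards_eq0; apply/eqP/setP=> x; rewrite !inE.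
      apply/negP=> /andP[xF yx].
      have [z Ex] := edge_at Esub (subsetP FE _ xF) yx.
      have yz : adj E y z by rewrite /adj -Ex (subsetP FE _ xF).
      by move: hF; rewrite Eh -(yl z yz) setUC -Ex xF.
    have F'C : h |: F \in C (E :\ g) lam.
      rewrite inC subUset sub1set !inE hg hE /= subsetD1 FE gnF /=.
      apply/forallP=> v; rewrite degU1 //.
      case vh: (v \in h); last by rewrite addn0 Fdeg.
      move: vh; rewrite Eh !inE => /orP[] /eqP ->; first by rewrite addn1.
      by rewrite degy (lpos h y hE yh).
    have := Fmax _ F'C (subsetUr _ _).
    by move=> E1; move: hF; rewrite -E1 setU11.
Qed.

Unset Implicit Arguments.

Theorem theorem3p1 (V : finType) (e : rel V) :
  symmetric e -> irreflexive e -> forest e ->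
  forall lam : V -> nat, vertex_decomposable (BD e lam).
Proof.
move=> esym eirr efor lam; rewrite BD_C.
exact: (main esym eirr efor (leqnn _) (subxx _)).
Qed.
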